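(* Let $d$ be a fixed nonzero complex constant, let $\{a_i\},\{b_i\},\{c_i\},\{d_i\}$ ($i\in\mathbb{Z}$) be complex sequences, and let $m,n\ge0$ be integers such that for $-n\le j\le m$ the quantities $(c_j-a_j)(1-\frac{a_jc_j}{d})$, $(d_j-a_j)(1-\frac{a_jd_j}{d})$, $(c_j-b_j)(1-\frac{b_jc_j}{d})$, $(d_j-b_j)(1-\frac{b_jd_j}{d})$ are nonzero. Then $$\sum_{k=-n}^{m}(b_k-a_k)\Big(1-\frac{a_kb_k}{d}\Big)(d_k-c_k)\Big(1-\frac{c_kd_k}{d}\Big)\frac{\prod_{j=1}^{k-1}(c_j-a_j)(1-\frac{a_jc_j}{d})}{\prod_{j=1}^{k}(d_j-a_j)(1-\frac{a_jd_j}{d})}\frac{\prod_{j=1}^{k-1}(d_j-b_j)(1-\frac{b_jd_j}{d})}{\prod_{j=1}^{k}(c_j-b_j)(1-\frac{b_jc_j}{d})}$$ $$=\frac{\prod_{j=1}^{m}(c_j-a_j)(1-\frac{a_jc_j}{d})}{\prod_{j=1}^{m}(d_j-a_j)(1-\frac{a_jd_j}{d})}\frac{\prod_{j=1}^{m}(d_j-b_j)(1-\frac{b_jd_j}{d})}{\prod_{j=1}^{m}(c_j-b_j)(1-\frac{b_jc_j}{d})}-\frac{\prod_{j=-n}^{0}(d_j-a_j)(1-\frac{a_jd_j}{d})}{\prod_{j=-n}^{0}(c_j-a_j)(1-\frac{a_jc_j}{d})}\frac{\prod_{j=-n}^{0}(c_j-b_j)(1-\frac{b_jc_j}{d})}{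\prod_{j=-n}^{0}(d_j-b_j)(1-\frac{b_jd_j}{d})}.$$
   Context: Products over integer ranges follow the convention: $\prod_{j=k}^{m}A_j=A_k\cdots A_m$ if $m\ge k$; $=1$ if $m=k-1$; $=(A_{m+1}\cdots A_{k-1})^{-1}$ if $m\le k-2$. The constant $d$ is a distinct object from the sequence $d_k$. *)

(* Defs.v *)
From mathcomp Require Import all_boot all_algebra.
From mathcomp Require Import reals.
From mathcomp.real_closed Require Import complex.
Set Implicit Arguments. Unset Strict Implicit. Unset Printing Implicit Defensive.
Import GRing.Theory Num.Theory.
Local Open Scope ring_scope.

(* Product over an integer range with the paper's convention:
   prod_{j=k}^{m} A_j = A_k ... A_m            if m >= k,
                      = 1                      if m = k-1,
                      = (A_{m+1} ... A_{k-1})^-1 if m <= k-2. *)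
Definition zprod {F : fieldType} (A : int -> F) (k m : int) : F :=
  if (k <= m + 1)%R then \prod_(i < absz (m + 1 - k)%R) A (k + i%:Z)
  else (\prod_(i < absz (k - 1 - m)%R) A (m + 1 + i%:Z))^-1.

Definition zsum {F : fieldType} (A : int -> F) (lo hi : int) : F :=
  \sum_(i < absz (hi + 1 - lo)%R) A (lo + i%:Z).

Definition fct {F : fieldType} (d : F) (x y : int -> F) (j : int) : F :=
  (y j - x j) * (1 - x j * y j / d).

(* Main.v *)
Require Import Defs.
From mathcomp Require Import all_boot all_order all_algebra.
From mathcomp Require Import reals.
From mathcomp.real_closed Require Import complex.
From mathcomp Require Import ring lra zify.
Import Order.TTheory.
Import GRing.Theory Num.Theory.
Local Open Scope ring_scope.

Lemma zprod_step {F : fieldType} (A : int -> F) (k : int) :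
  (k <= 0 -> A k != 0) -> zprod A 1 k = zprod A 1 (k - 1) * A k.
Proof.
rewrite /zprod; case: k => [[|p]|q] Hk.
- have h0 := Hk (lexx _).
  rewrite /= big_ord0 big_ord1 /= mulVf //.
- rewrite (_ : ((1 <= (Posz p.+1) + 1)%R = true)) //.
  rewrite (_ : ((1 <= (Posz p.+1) - 1 + 1)%R = true)); last by rewrite addrK.
  rewrite (_ : absz ((Posz p.+1) + 1 - 1)%R = p.+1); last by rewrite addrK.
  rewrite (_ : absz ((Posz p.+1) - 1 + 1 - 1)%R = p); last first.
    by rewrite addrK -addn1 PoszD addrK.
  rewrite big_ord_recr /=; congr (_ * A _).
- have hq : Negz q <= 0 by [].
  have h0 := Hk hq.
  rewrite (_ : ((1 <= Negz q + 1)%R = false)); last first.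
    by apply/negbTE; rewrite -ltNge NegzE; lia.
  rewrite (_ : ((1 <= Negz q - 1 + 1)%R = false)); last first.
    by apply/negbTE; rewrite -ltNge NegzE; lia.
  rewrite (_ : absz (1 - 1 - Negz q)%R = q.+1); last first.
    rewrite NegzE; lia.
  rewrite (_ : absz (1 - 1 - (Negz q - 1))%R = q.+2); last first.
    rewrite NegzE; lia.
  rewrite [in RHS]big_ord_recl invfM (_ : Negz q - 1 + 1 + (@ord0 q.+1 : nat) = Negz q); last by rewrite addr0 subrK.
  rewrite mulrAC mulVf // mul1r; congr (_^-1).
  apply: eq_bigr => i _; congr (A _); rewrite /bump /=.
  rewrite /bump /= add1n; move: (nat_of_ord i) => j; rewrite -addn1 PoszD; ring.
Qed.

Lemma zprod_neg {F : fieldType} (A : int -> F) (n : nat) :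
  zprod A 1 (- (n%:Z) - 1) = (zprod A (- (n%:Z)) 0)^-1.
Proof.
rewrite /zprod.
rewrite (_ : ((1 <= - (n%:Z) - 1 + 1)%R = false)); last first.
  by apply/negbTE; rewrite -ltNge; lia.
rewrite (_ : ((- (n%:Z) <= 0 + 1)%R = true)); last by lia.
rewrite (_ : absz (1 - 1 - (- (n%:Z) - 1))%R = n.+1); last by lia.
rewrite (_ : absz (0 + 1 - - (n%:Z))%R = n.+1); last by lia.
congr (_^-1); apply: eq_bigr => i _; congr (A _); ring.
Qed.

Lemma fct_id {F : fieldType} (d : F) (a b c e : int -> F) k : d != 0 ->
  fct d a b k * fct d c e k = fct d a c k * fct d b e k - fct d a e k * fct d b c k.
Proof. by move=> hd; rewrite /fct; field. Qed.

Lemma alg {F : fieldType} (ab ce ac be ae bc Pac Pbe u v : F) : ae != 0 -> bc != 0 ->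
  ab * ce = ac * be - ae * bc ->
  ab * ce * (Pac * (u * ae^-1)) * (Pbe * (v * bc^-1)) =
  Pac * ac * (u * ae^-1) * (Pbe * be * (v * bc^-1)) - Pac * u * (Pbe * v).
Proof. by move=> h1 h2 ->; field; rewrite h1 h2. Qed.

Lemma zsum_tel {F : fieldType} (T : int -> F) (lo : int) (N : nat) :
  \sum_(i < N) (T (lo + i%:Z) - T (lo + i%:Z - 1)) = T (lo + N%:Z - 1) - T (lo - 1).
Proof.
elim: N => [|N IH]; first by rewrite big_ord0 addr0 subrr.
rewrite big_ord_recr /= IH -addn1 PoszD [lo + (_ + 1)]addrA addrK; ring.
Qed.

Theorem corollary3p7 (R : realType) (d : R[i]) (a b c e : int -> R[i])
    (m n : nat) (hd : d != 0)
    (hne : forall j : int, (- (n%:Z) <= j)%R -> (j <= m%:Z)%R ->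
       [/\ fct d a c j != 0, fct d a e j != 0, fct d b c j != 0 & fct d b e j != 0]) :
  zsum (fun k : int =>
          fct d a b k * fct d c e k
          * (zprod (fct d a c) 1 (k - 1) / zprod (fct d a e) 1 k)
          * (zprod (fct d b e) 1 (k - 1) / zprod (fct d b c) 1 k))
       (- (n%:Z)) (m%:Z)
  = (zprod (fct d a c) 1 (m%:Z) / zprod (fct d a e) 1 (m%:Z))
      * (zprod (fct d b e) 1 (m%:Z) / zprod (fct d b c) 1 (m%:Z))
    - (zprod (fct d a e) (- (n%:Z)) 0 / zprod (fct d a c) (- (n%:Z)) 0)
      * (zprod (fct d b c) (- (n%:Z)) 0 / zprod (fct d b e) (- (n%:Z)) 0).
Proof.
pose Tf k := (zprod (fct d a c) 1 k / zprod (fct d a e) 1 k)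
      * (zprod (fct d b e) 1 k / zprod (fct d b c) 1 k).
have HN : absz (m%:Z + 1 - - n%:Z)%R = (m + n).+1 by lia.
rewrite /zsum HN.
transitivity (\sum_(i < (m + n).+1) (Tf (- n%:Z + i%:Z) - Tf (- n%:Z + i%:Z - 1))).
  apply: eq_bigr => i _.
  have hi := ltn_ord i.
  set k := (- n%:Z + i%:Z).
  have [h1 h2 h3 h4] := hne k ltac:(rewrite /k; lia) ltac:(rewrite /k; lia).
  rewrite /Tf (zprod_step (fct d a e) k) // (zprod_step (fct d b c) k) //.
  rewrite (zprod_step (fct d a c) k) // (zprod_step (fct d b e) k) //.
  rewrite [(_ * fct d a e k)^-1]invfM [(_ * fct d b c k)^-1]invfM; apply: alg => //; exact: fct_id.
rewrite zsum_tel /Tf (_ : - n%:Z + (m + n).+1%:Z - 1 = m%:Z); last by lia.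
rewrite !zprod_neg !invrK; congr (_ - _).
by congr (_ * _); rewrite mulrC.
Qed.
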